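(* Let $\lambda_1<\dots<\lambda_N$ be real and $u_1,\dots,u_N\in(-1,1)\setminus\{0\}$ with $\sum_{i=1}^Nu_i^2=1$, and set $s_{\lambda,u}(l)=\sum_{i=1}^N\frac{u_i^2}{l-\lambda_i}$ for $l>\lambda_N$. If $1>|\alpha|\ge|u_N|$, then $$\sup_{\sigma\in\mathbb{R}^N:\,|\sigma|=1,\,\sigma\cdot u=\alpha}\sum_{i=1}^N\lambda_i\sigma_i^2=\inf_{l>\lambda_N}\left\{l-\frac{\alpha^2}{s_{\lambda,u}(l)}\right\}.$$ If $\alpha\in[-|u_N|,|u_N|]$, then $$\lambda_N-\frac{2u_N^2}{\sqrt{1-u_N^2}}(\lambda_N-\lambda_1)\le\sup_{\sigma\in\mathbb{R}^N:\,|\sigma|=1,\,\sigma\cdot u=\alpha}\sum_{i=1}^N\lambda_i\sigma_i^2\le\lambda_N.$$ *)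

(* Defs.v *)
From HB Require Import structures.
From mathcomp Require Import all_boot all_order all_algebra.
From mathcomp Require Import all_classical all_reals.
Set Implicit Arguments. Unset Strict Implicit. Unset Printing Implicit Defensive.
Import Order.TTheory GRing.Theory Num.Theory.
Local Open Scope ring_scope.
Local Open Scope classical_set_scope.

Definition s_lu {R : realType} (n : nat) (lam u : 'I_n -> R) (l : R) : R :=
  \sum_(i < n) u i ^+ 2 / (l - lam i).

Definition rayleigh_set {R : realType} (n : nat) (lam u : 'I_n -> R) (alpha : R)
  : set R :=
  [set (\sum_(i < n) lam i * sigma i ^+ 2) | sigma in
     [set sigma : 'I_n -> R | Num.sqrt (\sum_(i < n) sigma i ^+ 2) = 1 /\
                               \sum_(i < n) sigma i * u i = alpha]].

Definition dual_set {R : realType} (n : nat) (lam u : 'I_n -> R) (lmax alpha : R)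
  : set R :=
  [set (l - alpha ^+ 2 / s_lu lam u l) | l in [set l : R | lmax < l]].

(* Main.v *)
Require Import Defs.
From HB Require Import structures.
From mathcomp Require Import all_boot all_order all_algebra.
From mathcomp Require Import all_classical all_reals all_analysis.
From mathcomp Require Import ring lra.
Import Order.TTheory GRing.Theory Num.Theory.
Import numFieldNormedType.Exports.
Local Open Scope ring_scope.
Local Open Scope classical_set_scope.


Lemma CS_ineq (R : realType) (m : nat) (w a b : 'I_m -> R) :
  (forall i, 0 < w i) -> 0 < \sum_i b i ^+ 2 / w i ->
  (\sum_i a i * b i) ^+ 2 <= (\sum_i w i * a i ^+ 2) * (\sum_i b i ^+ 2 / w i).
Proof.
move=> wpos Spos.
set P := \sum_i a i * b i; set W := \sum_i w i * a i ^+ 2.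
set S := \sum_i b i ^+ 2 / w i.
set t := P / S.
have E : \sum_i w i * (a i - t * b i / w i) ^+ 2 = W - 2 * t * P + t ^+ 2 * S.
  transitivity (\sum_i (w i * a i ^+ 2 - (2 * t) * (a i * b i) + t ^+ 2 * (b i ^+ 2 / w i))).
    apply: eq_bigr => i _; have := wpos i; rewrite lt0r => /andP[wn0 _].
    by field.
  by rewrite big_split /= sumrB -!mulr_sumr.
have : 0 <= W - 2 * t * P + t ^+ 2 * S.
  rewrite -E; apply: sumr_ge0 => i _; apply: mulr_ge0; [exact: ltW | exact: sqr_ge0].
have -> : W - 2 * t * P + t ^+ 2 * S = W - P ^+ 2 / S.
  rewrite /t; have Sn0 : S != 0 by rewrite gt_eqF.
  by field.
by rewrite subr_ge0 ler_pdivrMr.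
Qed.

Lemma sum_cont (R : realType) (I : Type) (r : seq I) (F : I -> R -> R) (x : R) :
  (forall i, {for x, continuous (F i)}) ->
  {for x, continuous (fun y => \sum_(i <- r) F i y)}.
Proof.
move=> H; elim: r => [|a r IH].
  have -> : (fun y => \sum_(i <- [::]) F i y) = (fun _ => 0).
    by apply: funext => y; rewrite big_nil.
  exact: cvg_cst.
have -> : (fun y => \sum_(i <- a :: r) F i y) = (fun y => F a y + \sum_(i <- r) F i y).
  by apply: funext => y; rewrite big_cons.
exact: (@continuousD _ R^o _ _ _ x (H a) IH).
Qed.

Lemma frac_cont (R : realType) (c d : R) (x : R) : x != d ->
  {for x, continuous (fun l => c / (l - d))}.
Proof.
move=> xd.
have h1 : {for x, continuous (fun l : R => l - d)}.
  apply: (@continuousB _ R^o _ (fun l => l) (fun _ => d)); [exact: cvg_id | exact: cvg_cst].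
have h2 := continuousV _ h1; rewrite subr_eq0 in h2; have h3 := h2 xd.
exact: (@continuousM _ _ (fun _ => c) _ x (cvg_cst _) h3).
Qed.

Lemma frac2_cont (R : realType) (c d : R) (x : R) : x != d ->
  {for x, continuous (fun l => c / (l - d) ^+ 2)}.
Proof.
move=> xd.
have h1 : {for x, continuous (fun l : R => (l - d) ^+ 2)}.
  have h0 : {for x, continuous (fun l : R => l - d)}.
    apply: (@continuousB _ R^o _ (fun l => l) (fun _ => d)); [exact: cvg_id | exact: cvg_cst].
  exact: (@continuousM _ _ _ _ x h0 h0).
have h2 := continuousV _ h1.
have h3 : (x - d) ^+ 2 != 0 by rewrite sqrf_eq0 subr_eq0.
exact: (@continuousM _ _ (fun _ => c) _ x (cvg_cst _) (h2 h3)).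
Qed.

Theorem lemma3p1 (R : realType) (n : nat) (lam u : 'I_n.+1 -> R)
  (hlam : forall i j : 'I_n.+1, (i < j)%N -> lam i < lam j)
  (hu : forall i : 'I_n.+1, -1 < u i < 1 /\ u i != 0)
  (hsum : \sum_(i < n.+1) u i ^+ 2 = 1) :
  (forall alpha : R, `|u ord_max| <= `|alpha| < 1 ->
     sup (rayleigh_set lam u alpha) = inf (dual_set lam u (lam ord_max) alpha)) /\
  (forall alpha : R, `|alpha| <= `|u ord_max| ->
     lam ord_max - 2 * u ord_max ^+ 2 / Num.sqrt (1 - u ord_max ^+ 2)
                   * (lam ord_max - lam ord0)
       <= sup (rayleigh_set lam u alpha)
     /\ sup (rayleigh_set lam u alpha) <= lam ord_max).
Proof.
set N := @ord_max n.
have lamN : forall i, lam i <= lam N.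
  move=> i; have := leq_ord i; rewrite leq_eqVlt => /orP[/eqP e|lt].
    by have -> : i = N by apply/val_inj.
  exact/ltW/hlam.
have lamNs : forall i, i != N -> lam i < lam N.
  move=> i iN; apply: hlam; have := leq_ord i; rewrite leq_eqVlt => /orP[/eqP e|//].
  by exfalso; move/eqP: iN; apply; apply/val_inj.
have lam0 : forall i, lam ord0 <= lam i.
  move=> i; have [e|lt] := posnP (nat_of_ord i); last exact/ltW/hlam.
  by have -> : i = ord0 by apply/val_inj.
have u2pos : forall i, 0 < u i ^+ 2.
  by move=> i; rewrite lt_def sqrf_eq0 (proj2 (hu i)) sqr_ge0.
have sgt : forall l, lam N < l -> 1 / (l - lam ord0) <= s_lu lam u l.
  move=> l lNl; rewrite /s_lu -hsum mulr_suml; apply: ler_sum => i _.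
  apply: ler_wpM2l; first exact: sqr_ge0.
  have h1 : 0 < l - lam i by rewrite subr_gt0; exact: le_lt_trans (lamN i) lNl.
  have h2 : 0 < l - lam ord0 by rewrite subr_gt0; exact: le_lt_trans (lamN ord0) lNl.
  rewrite lef_pV2 ?posrE //; exact: lerB (lexx l) (lam0 i).
have spos : forall l, lam N < l -> 0 < s_lu lam u l.
  move=> l lNl; apply: lt_le_trans (sgt l lNl); rewrite mul1r invr_gt0 subr_gt0.
  exact: le_lt_trans (lamN ord0) lNl.
have sq1 : forall s : 'I_n.+1 -> R, Num.sqrt (\sum_i s i ^+ 2) = 1 -> \sum_i s i ^+ 2 = 1.
  move=> s h; have h0 : 0 <= \sum_i s i ^+ 2 by apply: sumr_ge0 => i _; exact: sqr_ge0.
  by rewrite -(sqr_sqrtr h0) h expr1n.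
have weak : forall alpha l x, lam N < l -> rayleigh_set lam u alpha x ->
    x <= l - alpha ^+ 2 / s_lu lam u l.
  move=> alpha l x lNl [sig [hs1 hs2] <-].
  have hs := sq1 _ hs1.
  have wpos : forall i, 0 < l - lam i.
    by move=> i; rewrite subr_gt0; exact: le_lt_trans (lamN i) lNl.
  have CS := @CS_ineq R n.+1 _ sig u wpos (spos l lNl).
  rewrite hs2 -/(s_lu lam u l) in CS.
  have E : \sum_i (l - lam i) * sig i ^+ 2 = l - \sum_i lam i * sig i ^+ 2.
    under eq_bigr do rewrite mulrBl.
    by rewrite sumrB -mulr_sumr hs mulr1.
  rewrite E in CS.
  have sp := spos l lNl.
  have h : alpha ^+ 2 / s_lu lam u l <= l - \sum_i lam i * sig i ^+ 2.
    by rewrite ler_pdivrMr.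
  lra.
have rub : forall alpha x, rayleigh_set lam u alpha x -> x <= lam N.
  move=> alpha x [sig [hs1 _] <-]; rewrite -[lam N]mulr1 -(sq1 _ hs1) mulr_sumr.
  by apply: ler_sum => i _; apply: ler_wpM2r; [exact: sqr_ge0 | exact: lamN].
have hasub : forall alpha, has_ubound (rayleigh_set lam u alpha).
  by move=> alpha; exists (lam N) => x; exact: rub.

split; last first.
  move=> alpha ha.
  set uN := u N.
  have [/andP[hu1 hu2] hu3] := hu N.
  have uN2lt : uN ^+ 2 < 1 by rewrite /uN; nra.
  set r := Num.sqrt (1 - uN ^+ 2).
  have r2 : r ^+ 2 = 1 - uN ^+ 2 by rewrite sqr_sqrtr //; lra.
  have rpos : 0 < r by rewrite sqrtr_gt0; lra.
  have r1 : r <= 1 by nra.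
  have An : `|alpha| ^+ 2 = alpha ^+ 2 by rewrite real_normK ?num_real.
  have Un : `|uN| ^+ 2 = uN ^+ 2 by rewrite real_normK ?num_real.
  have A0 := normr_ge0 alpha; have U0 := normr_ge0 uN.
  have a2 : alpha ^+ 2 <= uN ^+ 2 by rewrite -An -Un; nra.
  set q := Num.sqrt (1 - alpha ^+ 2).
  have q2 : q ^+ 2 = 1 - alpha ^+ 2 by rewrite sqr_sqrtr //; lra.
  have q0 : 0 <= q by exact: sqrtr_ge0.
  have q1 : q <= 1 by nra.
  set t := (if 0 <= alpha * uN then -1 else 1) * q.
  have t2 : t ^+ 2 = 1 - alpha ^+ 2.
    by rewrite /t; case: ifP => _; rewrite ?mulN1r ?mul1r ?sqrrN q2.
  have tneg : alpha * t * uN = - (q * (`|alpha| * `|uN|)).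
    rewrite -normrM /t; case: ifP => h.
      by rewrite (ger0_norm h); ring.
    by rewrite (ltr0_norm); [ring | rewrite ltNge h].
  set c := alpha * uN - t * r; set d := alpha * r + t * uN.
  have cd1 : c ^+ 2 + d ^+ 2 = 1.
    have -> : c ^+ 2 + d ^+ 2 = (alpha ^+ 2 + t ^+ 2) * (uN ^+ 2 + r ^+ 2) by rewrite /c /d; ring.
    by rewrite r2 t2; ring.
  have cda : c * uN + d * r = alpha.
    have -> : c * uN + d * r = alpha * (uN ^+ 2 + r ^+ 2) by rewrite /c /d; ring.
    by rewrite r2; ring.
  have e : d ^+ 2 = (`|alpha| * r - q * `|uN|) ^+ 2.
    have -> : d ^+ 2 = alpha ^+ 2 * r ^+ 2 + t ^+ 2 * uN ^+ 2 + 2 * r * (alpha * t * uN).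
      by rewrite /d; ring.
    rewrite tneg t2 -q2 -An -Un; ring.
  have d2 : d ^+ 2 <= uN ^+ 2.
    rewrite e -Un.
    have f1 : `|alpha| * r <= `|uN| by nra.
    have f2 : q * `|uN| <= `|uN| by nra.
    have f3 : 0 <= `|alpha| * r by nra.
    have f4 : 0 <= q * `|uN| by nra.
    nra.
  have rn0 : r != 0 by rewrite gt_eqF.
  have Srest : \sum_(i < n.+1 | i != N) u i ^+ 2 = r ^+ 2.
    by move: hsum; rewrite (bigD1 N) //= r2 -/uN => h; lra.
  pose sig := fun i : 'I_n.+1 => if i == N then c else d * u i / r.
  have ss : \sum_i sig i ^+ 2 = 1.
    rewrite (bigD1 N) //= /sig eqxx.
    transitivity (c ^+ 2 + (d / r) ^+ 2 * \sum_(i < n.+1 | i != N) u i ^+ 2).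
      congr (_ + _); rewrite mulr_sumr; apply: eq_bigr => i /negbTE ->; (field; try done).
by rewrite Srest -cd1; (field; try done).
  have su : \sum_i sig i * u i = alpha.
    rewrite (bigD1 N) //= /sig eqxx.
    transitivity (c * uN + (d / r) * \sum_(i < n.+1 | i != N) u i ^+ 2).
      congr (_ + _); rewrite mulr_sumr; apply: eq_bigr => i /negbTE ->; (field; try done).
    by rewrite Srest -cda; (field; try done).
  have mem : rayleigh_set lam u alpha (\sum_i lam i * sig i ^+ 2).
    by exists sig => //; split; [rewrite ss sqrtr1 | exact: su].
  have lb : lam N * c ^+ 2 + lam ord0 * d ^+ 2 <= \sum_i lam i * sig i ^+ 2.
    rewrite (bigD1 N) //= /sig eqxx lerD2l.
    have -> : lam ord0 * d ^+ 2 = \sum_(i < n.+1 | i != N) lam ord0 * (d * u i / r) ^+ 2.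
      rewrite -mulr_sumr.
      transitivity (lam ord0 * ((d / r) ^+ 2 * \sum_(i < n.+1 | i != N) u i ^+ 2)).
        by rewrite Srest; congr (_ * _); (field; try done).
      congr (_ * _); rewrite mulr_sumr; apply: eq_bigr => i _; (field; try done).
    apply: ler_sum => i /negbTE ->; apply: ler_wpM2r; [exact: sqr_ge0 | exact: lam0].
  split.
    apply: le_trans (ub_le_sup (hasub alpha) mem).
    apply: le_trans lb.
    set w := 2 * uN ^+ 2 / r.
    have uw : uN ^+ 2 <= w by rewrite /w ler_pdivlMr //; nra.
    have l0 : 0 <= lam N - lam ord0 by rewrite subr_ge0.
    have wd : 0 <= w - d ^+ 2 by lra.
    have := mulr_ge0 l0 wd.
    have hc : c ^+ 2 = 1 - d ^+ 2 by lra.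
    rewrite hc; nra.
  apply: ge_sup; first by exists (\sum_i lam i * sig i ^+ 2).
  exact: rub.

move=> alpha /andP[ha1 ha2].
set D := dual_set lam u (lam N) alpha.
have dualne : D !=set0.
  exists (lam N + 1 - alpha ^+ 2 / s_lu lam u (lam N + 1)).
  by exists (lam N + 1) => //=; rewrite ltrDl ltr01.
have lbD : forall x, rayleigh_set lam u alpha x -> lbound D x.
  by move=> x hx y [l hl <-]; exact: weak.
suff [x0 hx0 hinf] : exists2 x, rayleigh_set lam u alpha x & inf D <= x.
  apply: le_anti; rewrite (le_trans hinf (ub_le_sup (hasub alpha) hx0)) andbT.
  apply: ge_sup; first by exists x0.
  by move=> x hx; apply: lb_le_inf dualne (lbD x hx).
have [/andP[hu1 hu2] hu3] := hu N.
set uN := u N.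
have An : `|alpha| ^+ 2 = alpha ^+ 2 by rewrite real_normK ?num_real.
have Un : `|uN| ^+ 2 = uN ^+ 2 by rewrite real_normK ?num_real.
have A0 := normr_ge0 alpha; have U0 := normr_ge0 uN.
have uNn0 : uN != 0 by [].
have U1 : `|uN| < 1 by rewrite ltr_norml hu1 hu2.
have Upos : 0 < `|uN| by rewrite normr_gt0.
move: ha1; rewrite le_eqVlt => /orP[/eqP eq | lt].
  have a2 : alpha ^+ 2 = uN ^+ 2 by rewrite -An -Un eq.
  pose sig := fun i : 'I_n.+1 => if i == N then alpha / uN else 0.
  have ss : \sum_i sig i ^+ 2 = 1.
    rewrite (bigD1 N) //= /sig eqxx big1 => [|i /negbTE -> ]; last by rewrite expr0n.
    by rewrite addr0 expr_div_n a2 divff // sqrf_eq0.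
  have su : \sum_i sig i * u i = alpha.
    rewrite (bigD1 N) //= /sig eqxx big1 => [|i /negbTE -> ]; last by rewrite mul0r.
    by rewrite addr0 divfK.
  have sv : \sum_i lam i * sig i ^+ 2 = lam N.
    rewrite (bigD1 N) //= /sig eqxx big1 => [|i /negbTE -> ]; last by rewrite expr0n mulr0.
    by rewrite addr0 expr_div_n a2 divff ?mulr1 // sqrf_eq0.
  have mem : rayleigh_set lam u alpha (lam N).
    by exists sig => //; split; [rewrite ss sqrtr1 | exact: su].
  exists (lam N) => //.
  have hlb : has_lbound D by exists (lam N); exact: lbD.
  apply/ler_addgt0Pr => e e0.
  have lt1 : lam N < lam N + e by rewrite ltrDl.
  apply: le_trans (ge_inf hlb _) _.
    by exists (lam N + e).
  rewrite lerBlDr lerDl; apply: divr_ge0; [exact: sqr_ge0 | exact/ltW/spos].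

set K := \sum_(i < n.+1 | i != N) u i ^+ 2 / (lam N - lam i).
have K0 : 0 <= K.
  apply: sumr_ge0 => i iN; apply: divr_ge0; first exact: sqr_ge0.
  by rewrite subr_ge0 ltW // lamNs.
set dl := `|uN| * (`|alpha| - `|uN|) / (K + 1).
have dpos : 0 < dl.
  by rewrite /dl divr_gt0 ?mulr_gt0 ?subr_gt0 //; lra.
have d1 : dl <= 1.
  rewrite /dl ler_pdivrMr; last by lra.
  have : `|alpha| <= 1 by exact: ltW.
  nra.
have Kn0 : K + 1 != 0 by rewrite gt_eqF //; lra.
have dn0 : dl != 0 by rewrite gt_eqF.
set a := lam N + dl.
set Dl := lam N - lam ord0.
have Dl0 : 0 <= Dl by rewrite subr_ge0.
have A1 : 0 < 1 - `|alpha| by rewrite subr_gt0.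
set b := lam N + Dl / (1 - `|alpha|) + 1.
have Xb : 1 <= b - lam N.
  have : 0 <= Dl / (1 - `|alpha|) by apply: divr_ge0 => //; exact: ltW.
  rewrite /b; lra.
have ab : a <= b by rewrite /a; lra.
pose B := fun l => \sum_(i < n.+1) u i ^+ 2 / (l - lam i) ^+ 2.
pose h := fun l => s_lu lam u l ^+ 2 - alpha ^+ 2 * B l.
have ha_ : h a <= 0.
  have aN : a - lam N = dl by rewrite /a; ring.
  have sa : s_lu lam u a <= `|alpha| * `|uN| / dl.
    rewrite /s_lu (bigD1 N) //= aN -/uN.
    have rest : \sum_(i < n.+1 | i != N) u i ^+ 2 / (a - lam i) <= K.
      apply: ler_sum => i iN; apply: ler_wpM2l; first exact: sqr_ge0.
      have h1 : 0 < lam N - lam i by rewrite subr_gt0 lamNs.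
      rewrite lef_pV2 ?posrE //; last by rewrite /a; lra.
      by rewrite /a; lra.
    have eqK : `|alpha| * `|uN| / dl - uN ^+ 2 / dl = K + 1.
      rewrite /dl -Un; field.
      by rewrite Kn0 !gt_eqF // subr_gt0.
    lra.
  have sa0 : 0 < s_lu lam u a by apply: spos; rewrite /a ltrDl.
  have Ba : uN ^+ 2 / dl ^+ 2 <= B a.
    rewrite /B (bigD1 N) //= aN -/uN lerDl.
    apply: sumr_ge0 => i _; apply: divr_ge0; exact: sqr_ge0.
  have sq : (`|alpha| * `|uN| / dl) ^+ 2 = alpha ^+ 2 * (uN ^+ 2 / dl ^+ 2).
    by rewrite -An -Un; field.
  have s2 : s_lu lam u a ^+ 2 <= (`|alpha| * `|uN| / dl) ^+ 2.
    nra.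
  have := ler_wpM2l (sqr_ge0 alpha) Ba.
  rewrite /h; lra.
have hb_ : 0 <= h b.
  set X := b - lam N; set Y := b - lam ord0.
  have X0 : 0 < X by rewrite /X; lra.
  have XY : Y = X + Dl by rewrite /Y /X /Dl; ring.
  have Y0 : 0 < Y by lra.
  have bN : lam N < b by lra.
  have eqX : X * (1 - `|alpha|) = Dl + (1 - `|alpha|).
    rewrite /X /b; have A1n : 1 - `|alpha| != 0 by rewrite gt_eqF.
    by field.
  have aYX : `|alpha| * Y <= X by rewrite XY; nra.
  have aYX2 : (`|alpha| * Y) ^+ 2 <= X ^+ 2.
    by rewrite ler_pXn2r // ?nnegrE ?mulr_ge0 // ltW.
  have sb : 1 / Y <= s_lu lam u b := sgt b bN.
  have Bb : B b <= 1 / X ^+ 2.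
    rewrite /B -hsum mulr_suml; apply: ler_sum => i _.
    apply: ler_wpM2l; first exact: sqr_ge0.
    have h1 : 0 < b - lam i by rewrite subr_gt0; exact: le_lt_trans (lamN i) bN.
    rewrite lef_pV2 ?posrE ?exprn_gt0 //.
    have : X <= b - lam i by rewrite /X lerB // lamN.
    nra.
  have s2 : (1 / Y) ^+ 2 <= s_lu lam u b ^+ 2.
    rewrite ler_pXn2r // ?nnegrE //; first by rewrite divr_ge0 // ltW.
    by rewrite (le_trans _ sb) // divr_ge0 // ltW.
  have e1 : alpha ^+ 2 * (1 / X ^+ 2) <= (1 / Y) ^+ 2.
    have Xn : X != 0 by rewrite gt_eqF.
    have Yn : Y != 0 by rewrite gt_eqF.
    have -> : alpha ^+ 2 * (1 / X ^+ 2) = (`|alpha| * Y) ^+ 2 / (X ^+ 2 * Y ^+ 2).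
      by rewrite -An; field; rewrite ?Xn ?Yn.
    have -> : (1 / Y) ^+ 2 = X ^+ 2 / (X ^+ 2 * Y ^+ 2) by field; rewrite ?Xn ?Yn.
    apply: ler_wpM2r => //; rewrite invr_ge0; apply: mulr_ge0; exact: sqr_ge0.
  have := ler_wpM2l (sqr_ge0 alpha) Bb.
  rewrite /h; lra.
have cont : {within `[a, b], continuous h}.
  apply: continuous_in_subspaceT => x; rewrite inE /= in_itv /= => /andP[ax _].
  have xN : lam N < x by rewrite /a in ax; lra.
  have xne : forall i, x != lam i.
    by move=> i; rewrite gt_eqF //; exact: le_lt_trans (lamN i) xN.
  have cs : {for x, continuous (s_lu lam u)}.
    exact: (@sum_cont R _ _ (fun i l => u i ^+ 2 / (l - lam i)) x (fun i => @frac_cont R (u i ^+ 2) (lam i) x (xne i))).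
  have cB : {for x, continuous B}.
    exact: (@sum_cont R _ _ (fun i l => u i ^+ 2 / (l - lam i) ^+ 2) x (fun i => @frac2_cont R (u i ^+ 2) (lam i) x (xne i))).
  have c1 := @continuousM _ _ _ _ x cs cs.
  have cc : {for x, continuous (fun _ : R => alpha ^+ 2)} by exact: cvg_cst.
  have c2 := @continuousM _ _ (fun _ => alpha ^+ 2) _ x cc cB.
  have e : h = (s_lu lam u \* s_lu lam u) - ((fun _ => alpha ^+ 2) \* B).
    by apply: funext => y; rewrite /h /= expr2.
  rewrite e; exact: (continuousB c1 c2).
have hv : Num.min (h a) (h b) <= 0 <= Num.max (h a) (h b) by rewrite ge_min le_max ha_ hb_ orbT.
have [l lin hl] := IVT ab cont hv.
move: lin; rewrite in_itv /= => /andP[al _].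
have lN : lam N < l by rewrite /a in al; lra.
set sl := s_lu lam u l.
have slpos : 0 < sl := spos l lN.
have sln0 : sl != 0 by rewrite gt_eqF.
have wn0 : forall i, l - lam i != 0.
  by move=> i; rewrite subr_eq0 gt_eqF //; exact: le_lt_trans (lamN i) lN.
have hs : sl ^+ 2 = alpha ^+ 2 * B l by move: hl; rewrite /h -/sl => /eqP; rewrite subr_eq0 => /eqP.
pose sig := fun i => alpha * u i / ((l - lam i) * sl).
have ss : \sum_i sig i ^+ 2 = 1.
  transitivity (alpha ^+ 2 / sl ^+ 2 * B l).
    rewrite /B mulr_sumr; apply: eq_bigr => i _; rewrite /sig.
    have wi := wn0 i; field; by rewrite ?wi ?sln0.
  by rewrite mulrAC -hs divff // sqrf_eq0.
have su : \sum_i sig i * u i = alpha.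
  transitivity (alpha / sl * \sum_i u i ^+ 2 / (l - lam i)).
    rewrite mulr_sumr; apply: eq_bigr => i _; rewrite /sig.
    have wi := wn0 i; field; by rewrite ?wi ?sln0.
  by rewrite -/(s_lu lam u l) -/sl divfK.
have sv : \sum_i lam i * sig i ^+ 2 = l - alpha ^+ 2 / sl.
  transitivity (\sum_i (l * sig i ^+ 2 - alpha ^+ 2 / sl ^+ 2 * (u i ^+ 2 / (l - lam i)))).
    apply: eq_bigr => i _; rewrite /sig.
    have wi := wn0 i; field; by rewrite ?wi ?sln0.
  rewrite sumrB -!mulr_sumr ss -/(s_lu lam u l) -/sl mulr1.
  by congr (_ - _); field; rewrite ?sln0.
have mem : rayleigh_set lam u alpha (l - alpha ^+ 2 / sl).
  by exists sig => //; split; [rewrite ss sqrtr1 | exact: su].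
exists (l - alpha ^+ 2 / sl) => //.
have hlb : has_lbound D by exists (l - alpha ^+ 2 / sl); exact: lbD.
by apply: (ge_inf hlb); exists l.
Qed.
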